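(* Let $G$ be a layered, structurally saturated sequent. Then the relation $\le$ on the layers of $G$ is a (partial) order relation, i.e. reflexive, transitive and antisymmetric.
   Context: A sequent $G$ is $\mathcal{R},\Gamma\Rightarrow\Delta$ where $\mathcal{R}$ is a set of relational atoms $xRy$ or $x\le y$ between labels and $\Gamma,\Delta$ are multisets of labelled formulas $x{:}A$. Write $x\le_G y$, $xR_Gy$ if the corresponding atom is in $\mathcal{R}$; $x{:}C^\bullet$ means $x{:}C\in\Gamma$. $G$ is structurally saturated if: $x\le_G y$ and $x{:}C^\bullet$ imply $y{:}C^\bullet$; $xR_Gy$ and $y\le_G z$ imply some $u$ with $x\le_G u$ and $uR_Gz$; $xR_Gy$ and $x\le_G z$ imply some $u$ with $y\le_G u$ and $zR_Gu$; $\le_G$ and $R_G$ are both transitive and reflexive on all labels of $G$. A layer of $G$ is an equivalence class of the reflexive-transitive closure $\sim_G$ of $R_G\cup R_G^{-1}$. $G$ is layered if for all labels $x,x',y,y'$: (1) if $x\sim_G y$... precisely: if $x \mathrel{(R_G\cup R_G^{-1})^*} y$ with $x\ne y$ then neither $x\le_G y$ nor $y\le_G x$; (2) if $x \mathrel{(R_G\cup R_G^{-1})^*} y$, $x' \mathrel{(R_G\cup R_G^{-1})^*} y'$, $x\le_G x'$ and $x\ne x'$, then not $y'\le_G y$. For layers $L_1,L_2$, $L_1\le L_2$ iff there are $x\in L_1$, $y\in L_2$ with $x\le_G y$. *)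

(* Defs.v *)
From Stdlib Require Import List Relations.
Import ListNotations.

Definition label := nat.

(* Formulas of (intuitionistic) modal logic; the statement does not depend
   on the connectives, only on labelled formulas x:A occurring in Gamma. *)
Inductive form : Type :=
| Var  : nat -> form
| Bot  : form
| And  : form -> form -> form
| Or   : form -> form -> form
| Imp  : form -> form -> form
| Box  : form -> form
| Dia  : form -> form.

Inductive ratom : Type :=
| RelR  : label -> label -> ratom
| RelLe : label -> label -> ratom.

Definition lform := (label * form)%type.

(* A sequent  R, Gamma => Delta  (multisets represented by lists). *)
Record sequent : Type := Sequent {
  rels  : list ratom;
  gamma : list lform;
  delta : list lform }.

Definition leG (G : sequent) (x y : label) : Prop := In (RelLe x y) (rels G).
Definition RG  (G : sequent) (x y : label) : Prop := In (RelR x y) (rels G).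
Definition inGamma (G : sequent) (x : label) (C : form) : Prop := In (x, C) (gamma G).

Definition ratom_labels (a : ratom) : list label :=
  match a with RelR x y => [x; y] | RelLe x y => [x; y] end.
Definition labels (G : sequent) : list label :=
  flat_map ratom_labels (rels G) ++ map fst (gamma G) ++ map fst (delta G).
Definition is_label (G : sequent) (x : label) : Prop := In x (labels G).

Definition simG (G : sequent) : relation label :=
  clos_refl_trans label (fun x y => RG G x y \/ RG G y x).

Definition structurally_saturated (G : sequent) : Prop :=
  (forall x y C, leG G x y -> inGamma G x C -> inGamma G y C) /\
  (forall x y z, RG G x y -> leG G y z -> exists u, leG G x u /\ RG G u z) /\
  (forall x y z, RG G x y -> leG G x z -> exists u, leG G y u /\ RG G z u) /\
  (forall x y z, leG G x y -> leG G y z -> leG G x z) /\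
  (forall x y z, RG G x y -> RG G y z -> RG G x z) /\
  (forall x, is_label G x -> leG G x x) /\
  (forall x, is_label G x -> RG G x x).

Definition layered (G : sequent) : Prop :=
  (forall x y, simG G x y -> x <> y -> ~ leG G x y /\ ~ leG G y x) /\
  (forall x x' y y', simG G x y -> simG G x' y' -> leG G x x' -> x <> x' ->
     ~ leG G y' y).

Definition is_layer (G : sequent) (L : label -> Prop) : Prop :=
  exists x, is_label G x /\ forall y, L y <-> (is_label G y /\ simG G x y).

Definition layer_le (G : sequent) (L1 L2 : label -> Prop) : Prop :=
  exists x y, L1 x /\ L2 y /\ leG G x y.

(* Main.v *)
Require Import Defs.
From Stdlib Require Import List Relations FunctionalExtensionality PropExtensionality Arith.
Import ListNotations.

Lemma sim_sym G x y : simG G x y -> simG G y x.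
Proof.
  induction 1.
  - apply rt_step. destruct H; auto.
  - apply rt_refl.
  - eapply rt_trans; eauto.
Qed.

Lemma sim_trans G x y z : simG G x y -> simG G y z -> simG G x z.
Proof. intros; eapply rt_trans; eauto. Qed.

Lemma le_label_r G x y : leG G x y -> is_label G y.
Proof.
  intro H. unfold is_label, labels. apply in_or_app. left.
  apply in_flat_map. exists (RelLe x y). split; [exact H| simpl; auto].
Qed.

Lemma fwd G : structurally_saturated G ->
  forall x z, simG G x z -> forall y, leG G x y -> exists u, leG G z u /\ simG G y u.
Proof.
  intros [_ [H2 [H3 _]]] x z Hs.
  apply clos_rt_rt1n in Hs.
  induction Hs as [x|x w z Hxw Hwz IH]; intros y Hy.
  - exists y; split; [exact Hy | apply rt_refl].
  - destruct Hxw as [Hr|Hr].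
    + destruct (H3 _ _ _ Hr Hy) as [u [Hu1 Hu2]].
      destruct (IH _ Hu1) as [v [Hv1 Hv2]].
      exists v; split; auto. eapply rt_trans; [apply rt_step; left; exact Hu2| exact Hv2].
    + destruct (H2 _ _ _ Hr Hy) as [u [Hu1 Hu2]].
      destruct (IH _ Hu1) as [v [Hv1 Hv2]].
      exists v; split; auto. eapply rt_trans; [apply rt_step; right; exact Hu2| exact Hv2].
Qed.

Theorem mainTheorem4 (G : sequent) :
  layered G -> structurally_saturated G ->
  (forall L, is_layer G L -> layer_le G L L) /\
  (forall L1 L2 L3, is_layer G L1 -> is_layer G L2 -> is_layer G L3 ->
     layer_le G L1 L2 -> layer_le G L2 L3 -> layer_le G L1 L3) /\
  (forall L1 L2, is_layer G L1 -> is_layer G L2 ->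
     layer_le G L1 L2 -> layer_le G L2 L1 -> L1 = L2).
Proof.
  intros [Ly1 Ly2] HS.
  pose proof HS as HS'.
  destruct HS' as [_ [_ [_ [Ht [_ [Hrefl _]]]]]].
  split; [|split].
  - intros L [b [Hb HL]]. exists b, b.
    split; [apply HL; split; auto; apply rt_refl|].
    split; [apply HL; split; auto; apply rt_refl|]. auto.
  - intros L1 L2 L3 _ [b2 [_ HL2]] [b3 [_ HL3]]
      [x1 [y2 [Hx1 [Hy2 Hxy]]]] [x2 [y3 [Hx2 [Hy3 Hxy']]]].
    apply HL2 in Hy2. apply HL2 in Hx2. apply HL3 in Hy3.
    assert (Hs : simG G x2 y2)
      by (eapply sim_trans; [apply sim_sym; apply Hx2| apply Hy2]).
    destruct (fwd G HS _ _ Hs _ Hxy') as [u [Hu1 Hu2]].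
    exists x1, u. split; auto. split.
    + apply HL3. split; [eapply le_label_r; eauto|].
      eapply sim_trans; [apply Hy3| exact Hu2].
    + eapply Ht; eauto.
  - intros L1 L2 [b1 [_ HL1]] [b2 [_ HL2]]
      [x1 [y2 [Hx1 [Hy2 Hxy]]]] [x2 [y1 [Hx2 [Hy1 Hxy']]]].
    apply HL1 in Hx1. apply HL1 in Hy1. apply HL2 in Hy2. apply HL2 in Hx2.
    assert (Hs : simG G x2 y2)
      by (eapply sim_trans; [apply sim_sym; apply Hx2| apply Hy2]).
    destruct (fwd G HS _ _ Hs _ Hxy') as [u [Hu1 Hu2]].
    assert (Hx1u : leG G x1 u) by (eapply Ht; eauto).
    assert (Hsx1u : simG G x1 u).
    { eapply sim_trans; [apply sim_sym; apply Hx1|].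
      eapply sim_trans; [apply Hy1| exact Hu2]. }
    assert (Heq : x1 = u).
    { destruct (Nat.eq_dec x1 u) as [e|n]; auto.
      exfalso. apply (proj1 (Ly1 _ _ Hsx1u n)). exact Hx1u. }
    subst u.
    assert (Heq2 : x1 = y2).
    { destruct (Nat.eq_dec x1 y2) as [e|n]; auto.
      exfalso. apply (Ly2 x1 y2 x1 y2 (rt_refl _ _ _) (rt_refl _ _ _) Hxy n Hu1). }
    subst y2.
    assert (Hb : simG G b1 b2).
    { eapply sim_trans; [apply Hx1| apply sim_sym; apply Hy2]. }
    apply functional_extensionality; intro y.
    apply propositional_extensionality.
    rewrite HL1, HL2. split; intros [H1 H2]; split; auto.
    + eapply sim_trans; [apply sim_sym; exact Hb| exact H2].
    + eapply sim_trans; [exact Hb| exact H2].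
Qed.
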